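(* For every $D \in \Omega_n$, $n - 1 \le r_{\mathcal{S}_2}(D)^2 \le 2n$.
   Context: $\Omega_n$ denotes the set of $n\times n$ doubly stochastic matrices (nonnegative real entries, all row and column sums equal to $1$). $\|\cdot\|_{\mathcal{S}_2}$ is the Frobenius norm. For $A\in M_n(\mathbb{R})$, $r_{\mathcal{S}_2}(A) := \max_{B\in\Omega_n}\|A-B\|_{\mathcal{S}_2}$. *)

(* Defs.v *)
From HB Require Import structures.
From mathcomp Require Import all_boot all_order all_algebra.
From mathcomp Require Import classical_sets reals.
Set Implicit Arguments. Unset Strict Implicit. Unset Printing Implicit Defensive.
Import Order.TTheory GRing.Theory Num.Theory.
Local Open Scope ring_scope.

Definition doubly_stochastic {R : realType} {n : nat} (B : 'M[R]_n) : Prop :=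
  (forall i j, 0 <= B i j) /\
  (forall i, \sum_j B i j = 1) /\
  (forall j, \sum_i B i j = 1).

Definition frob {R : realType} {m n : nat} (A : 'M[R]_(m, n)) : R :=
  Num.sqrt (\sum_i \sum_j A i j ^+ 2).

(* r_{S_2}(A) = max_{B in Omega_n} ||A - B||_{S_2}; the maximum exists
   (Omega_n is compact and nonempty), so it equals the supremum. *)
Local Open Scope classical_set_scope.
Definition rS2 {R : realType} {n : nat} (A : 'M[R]_n) : R :=
  reals.sup [set x : R | exists B : 'M[R]_n, doubly_stochastic B /\ x = frob (A - B)].

(* Main.v *)
Require Import Defs.
From HB Require Import structures.
From mathcomp Require Import all_boot all_order all_algebra.
From mathcomp Require Import classical_sets reals.
Import Order.TTheory GRing.Theory Num.Theory.
Local Open Scope ring_scope.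
From mathcomp Require Import ring lra.

Section S.
Variable R : realType.

Lemma entry_le1 n (B : 'M[R]_n) : doubly_stochastic B -> forall i j, B i j <= 1.
Proof.
move=> [h0 [hr _]] i j; rewrite -(hr i) (bigD1 j) //= lerDl.
by apply: sumr_ge0 => k _; exact: h0.
Qed.

Lemma ub_sq n (D B : 'M[R]_n) : doubly_stochastic D -> doubly_stochastic B ->
  \sum_i \sum_j (D - B) i j ^+ 2 <= 2 * n%:R.
Proof.
move=> hD hB.
have -> : 2 * n%:R = \sum_(i < n) \sum_(j < n) (D i j + B i j).
  have -> : 2 * n%:R = \sum_(i < n) (2 : R) by rewrite sumr_const card_ord mulr_natr.
  apply: eq_bigr => i _.
  by rewrite big_split /= hD.2.1 hB.2.1.
apply: ler_sum => i _; apply: ler_sum => j _; rewrite !mxE.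
have := hD.1 i j; have := hB.1 i j; have := @entry_le1 _ D hD i j; have := @entry_le1 _ B hB i j.
move=> *; nra.
Qed.

Lemma sq_ge1 m (D : 'M[R]_m.+1) : doubly_stochastic D -> 1 <= \sum_i \sum_j D i j ^+ 2.
Proof.
move=> hD; set c := (m.+1)%:R^-1 : R.
have cn : c * (m.+1)%:R = 1 by rewrite mulVf // pnatr_eq0.
have h : \sum_(i < m.+1) \sum_(j < m.+1) (2 * c * D i j - c ^+ 2) <= \sum_i \sum_j D i j ^+ 2.
  apply: ler_sum => i _; apply: ler_sum => j _.
  have := sqr_ge0 (D i j - c); rewrite sqrrB; lra.
apply: le_trans h; rewrite le_eqVlt; apply/orP; left; apply/eqP/esym.
rewrite (eq_bigr (fun i => 2 * c - c)); last first.
  move=> i _; rewrite big_split /= -mulr_sumr hD.2.1 sumrN sumr_const card_ord.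
  by rewrite mulr1 -[c ^+ 2 *+ _]mulr_natr expr2 -mulrA cn; ring.
by rewrite sumr_const card_ord -mulr_natr -{3}cn; ring.
Qed.

End S.

Section S2.
Variable R : realType.
Variable m : nat.
Definition Pk (k : 'I_m.+1) : 'M[R]_m.+1 := \matrix_(i, j) ((j == i + k)%:R).

Lemma sum_row (k i : 'I_m.+1) (f : 'I_m.+1 -> R) :
  \sum_j (j == i + k)%:R * f j = f (i + k).
Proof.
rewrite (bigD1 (i + k)) //= eqxx mul1r big1 ?addr0 // => j /negbTE ->.
by rewrite mul0r.
Qed.

Lemma sum_col (k j : 'I_m.+1) : \sum_i ((j == i + k)%:R : R) = 1.
Proof.
rewrite (bigD1 (j - k)) //= subrK eqxx big1 ?addr0 // => i hi.
case: eqP => // e; move: hi; by rewrite e addrK eqxx.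
Qed.

Lemma Pk_ds k : doubly_stochastic (Pk k).
Proof.
split; [|split] => i; first by move=> j; rewrite mxE ler0n.
  by rewrite -[RHS](sum_row k i (fun _ => 1)); apply: eq_bigr => j _; rewrite mxE mulr1.
by rewrite -(sum_col k i); apply: eq_bigr => j _; rewrite mxE.
Qed.

Lemma frob_Pk (D : 'M[R]_m.+1) k :
  \sum_i \sum_j (D - Pk k) i j ^+ 2 =
  \sum_i \sum_j D i j ^+ 2 - 2 * \sum_i D i (i + k) + (m.+1)%:R.
Proof.
have -> : \sum_i \sum_j (D - Pk k) i j ^+ 2 =
   \sum_i (\sum_j D i j ^+ 2 - 2 * D i (i + k) + 1).
  apply: eq_bigr => i _.
  rewrite (eq_bigr (fun j => D i j ^+ 2 - 2 * ((j == i + k)%:R * D i j) + (j == i + k)%:R * 1)); last first.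
    by move=> j _; rewrite !mxE; case: eqP => _ /=; ring.
  by rewrite !big_split /= sumrN -mulr_sumr !sum_row.

rewrite !big_split /= sumrN -mulr_sumr sumr_const card_ord //.
Qed.

Lemma exists_k (D : 'M[R]_m.+1) : doubly_stochastic D ->
  exists k, \sum_i D i (i + k) <= 1.
Proof.
move=> hD.
have hs : \sum_k \sum_i D i (i + k) = (m.+1)%:R.
  rewrite exchange_big /=.
  have -> : (m.+1)%:R = \sum_(i < m.+1) (1 : R) by rewrite sumr_const card_ord.
  apply: eq_bigr => i _; rewrite -(hD.2.1 i).
  by rewrite [RHS](reindex_inj (addrI i)).
case: (boolP [exists k, \sum_i D i (i + k) <= 1]) => [/existsP[k hk]|]; first by exists k.
rewrite negb_exists => /forallP h.
have : \sum_(k < m.+1) (1 : R) < \sum_k \sum_i D i (i + k).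
  apply: ltr_sum; first by apply/hasP; exists ord0; rewrite ?mem_index_enum.
  by move=> k _; have := h k; rewrite -ltNge.
by rewrite hs sumr_const card_ord ltxx.
Qed.
End S2.

Local Open Scope classical_set_scope.

Theorem mainTheorem5 (R : realType) (n : nat) (D : 'M[R]_n) :
  doubly_stochastic D ->
  n%:R - 1 <= rS2 D ^+ 2 /\ rS2 D ^+ 2 <= 2 * n%:R.
Proof.
move=> hD.
set E := [set x : R | exists B : 'M[R]_n, doubly_stochastic B /\ x = frob (D - B)].
have ubE : ubound E (Num.sqrt (2 * n%:R)).
  move=> x [B [hB ->]]; rewrite /frob ler_sqrt; last by rewrite mulr_ge0 ?ler0n.
  exact: ub_sq.
have hE : has_ubound E by exists (Num.sqrt (2 * n%:R)).
have inE B : doubly_stochastic B -> frob (D - B) <= rS2 D.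
  by move=> hB; apply: (ub_le_sup hE); exists B.
have s0 : 0 <= rS2 D by apply: le_trans (inE D hD); rewrite /frob sqrtr_ge0.
split; last first.
  have : rS2 D <= Num.sqrt (2 * n%:R) by apply: ge_sup => //; exists (frob (D - D)), D.
  rewrite -(ler_pXn2r (n := 2)) // ?nnegrE ?sqrtr_ge0 // sqr_sqrtr //.
  by rewrite mulr_ge0 ?ler0n.
case: n D hD E ubE hE inE s0 => [|m] D hD E ubE hE inE s0.
  by apply: le_trans (sqr_ge0 _); rewrite sub0r lerN10.
have [k hk] := @exists_k R m D hD.
have h := inE _ (@Pk_ds R m k).
have hf : (m.+1)%:R - 1 <= frob (D - Pk R m k) ^+ 2.
  rewrite /frob sqr_sqrtr; last by do 2 (apply: sumr_ge0 => ? _); exact: sqr_ge0.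
  rewrite frob_Pk; have := @sq_ge1 R m D hD; lra.
apply: le_trans hf _; rewrite ler_pXn2r // nnegrE // sqrtr_ge0 //.
Qed.
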